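(* Let $n\ge 2$, $L>0$, $T>0$, let $b_{ij}$ ($i\neq j$) be real numbers, and let $P=(P_1,\dots,P_n)$, $V=(V_1,\dots,V_n)$ with $P_i,V_i\in C^3([0,T]\times\mathbb T_L)$, $\mathbb T_L=\mathbb R/L\mathbb Z$, be a solution of $$\partial_tP_i+\partial_x(P_iV_i)=0,\qquad -\sum_{j=1}^nb_{ij}P_j(V_i-V_j)=\partial_x\log P_i-\frac{1}{\sum_{j=1}^nP_j}\sum_{j=1}^nP_j\partial_x\log P_j,\qquad \sum_{j=1}^nP_jV_j=0,$$ $i=1,\dots,n$, with $P_i(x,t)>0$ for all $x,t$ and $i$, and with $\sum_{j=1}^nP_j(x,0)=1$ for all $x$. For $N\ge1$, $h=L/N$, $\Delta t>0$ and $k\ge0$ with $(k+1)\Delta t\le T$, set $P^k_{i,\ell}=P_i(\ell h,k\Delta t)$ (cell-centered) and $V^{k}_{i,\ell+\frac12}=V_i((\ell+\frac12)h,k\Delta t)$ (edge-centered), and define the local truncation errors $$\tau^1_{i,\ell}=\frac{P^{k+1}_{i,\ell}-P^k_{i,\ell}}{\Delta t}+\big(d_h(\hat P^k_iV^{k+1}_i)\big)_\ell,$$ $$\tau^2_{i,\ell+\frac12}=\Big(D_h\log P^{k+1}_i-\frac{1}{\sum_{j=1}^n\hat P^k_j}\sum_{j=1}^n\hat P^k_jD_h\log P^{k+1}_j+\sum_{j=1}^nb_{ij}\hat P^k_j(V^{k+1}_i-V^{k+1}_j)\Big)_{\ell+\frac12},$$ $$\tau^3_{\ell+\frac12}=\sum_{i=1}^n\hat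 P^k_{i,\ell+\frac12}V^{k+1}_{i,\ell+\frac12}.$$ Then there is a constant $C>0$ depending on $(P,V)$ (but not on $h$, $\Delta t$, $k$, $i$, $\ell$) such that $$|\tau^1_{i,\ell}|,\ |\tau^2_{i,\ell+\frac12}|,\ |\tau^3_{\ell+\frac12}|\le C(\Delta t+h^2).$$
   Context: Difference operators on $N$-periodic grids: for edge-centered $\phi$, $(d_h\phi)_\ell=(\phi_{\ell+\frac12}-\phi_{\ell-\frac12})/h$; for cell-centered $f$, $(D_hf)_{\ell+\frac12}=(f_{\ell+1}-f_\ell)/h$ and $\hat f_{\ell+\frac12}=(f_\ell+f_{\ell+1})/2$. Products and logarithms are pointwise. *)

(* Defs.v *)
From Stdlib Require Import Reals ZArith List.
From Coquelicot Require Import Coquelicot.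
Open Scope R_scope.

Fixpoint sumR (n : nat) (f : nat -> R) : R :=
  match n with
  | O => 0
  | S m => sumR m f + f m
  end.

(* Iterated partial derivatives of g : R -> R -> R (arguments x then t).
   The list of directions is read left to right as the outermost derivative
   first: true = d/dx, false = d/dt. *)
Fixpoint pd (ds : list bool) (g : R -> R -> R) : R -> R -> R :=
  match ds with
  | nil => g
  | true :: ds' => fun x t => Derive (fun y => pd ds' g y t) x
  | false :: ds' => fun x t => Derive (fun s => pd ds' g x s) t
  end.

Definition C3 (g : R -> R -> R) : Prop :=
  (forall ds : list bool, (length ds < 3)%nat -> forall x t : R,
      ex_derive (fun y => pd ds g y t) x /\ ex_derive (fun s => pd ds g x s) t) /\
  (forall ds : list bool, (length ds <= 3)%nat -> forall x t : R,
      continuous (fun z : R * R => pd ds g (fst z) (snd z)) (x, t)).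

Definition periodic_x (L : R) (g : R -> R -> R) : Prop :=
  forall x t, g (x + L) t = g x t.

Definition is_solution (n : nat) (T : R) (b : nat -> nat -> R)
    (P V : nat -> R -> R -> R) : Prop :=
  forall t x, 0 <= t <= T ->
    (forall i, (i < n)%nat ->
       Derive (fun s => P i x s) t + Derive (fun y => P i y t * V i y t) x = 0) /\
    (forall i, (i < n)%nat ->
       - sumR n (fun j => b i j * P j x t * (V i x t - V j x t))
       = Derive (fun y => ln (P i y t)) x
         - / sumR n (fun j => P j x t)
           * sumR n (fun j => P j x t * Derive (fun y => ln (P j y t)) x)) /\
    sumR n (fun j => P j x t * V j x t) = 0.

(* Grid values: P^k_{i,l} = P_i(l h, k dt), V^k_{i,l+1/2} = V_i((l+1/2)h, k dt). *)
Definition Pc (P : nat -> R -> R -> R) (h dt : R) (k : nat) (i : nat) (l : Z) : R :=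
  P i (IZR l * h) (INR k * dt).
Definition Ve (V : nat -> R -> R -> R) (h dt : R) (k : nat) (i : nat) (l : Z) : R :=
  V i ((IZR l + /2) * h) (INR k * dt).
Definition Phat (P : nat -> R -> R -> R) (h dt : R) (k : nat) (i : nat) (l : Z) : R :=
  (Pc P h dt k i l + Pc P h dt k i (l + 1)) / 2.
Definition DlogP (P : nat -> R -> R -> R) (h dt : R) (k : nat) (i : nat) (l : Z) : R :=
  (ln (Pc P h dt (S k) i (l + 1)) - ln (Pc P h dt (S k) i l)) / h.

Definition tau1 (P V : nat -> R -> R -> R) (h dt : R) (k i : nat) (l : Z) : R :=
  (Pc P h dt (S k) i l - Pc P h dt k i l) / dt
  + (Phat P h dt k i l * Ve V h dt (S k) i l
     - Phat P h dt k i (l - 1) * Ve V h dt (S k) i (l - 1)) / h.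

Definition tau2 (n : nat) (b : nat -> nat -> R) (P V : nat -> R -> R -> R)
    (h dt : R) (k i : nat) (l : Z) : R :=
  DlogP P h dt k i l
  - / sumR n (fun j => Phat P h dt k j l)
    * sumR n (fun j => Phat P h dt k j l * DlogP P h dt k j l)
  + sumR n (fun j => b i j * Phat P h dt k j l
                     * (Ve V h dt (S k) i l - Ve V h dt (S k) j l)).

Definition tau3 (n : nat) (P V : nat -> R -> R -> R) (h dt : R) (k : nat) (l : Z) : R :=
  sumR n (fun i => Phat P h dt k i l * Ve V h dt (S k) i l).

(* Main.v *)
Require Import Defs.
From Stdlib Require Import Reals ZArith List Lra Lia.
From Coquelicot Require Import Coquelicot.
Open Scope R_scope.

Lemma is_derive_cont (f : R -> R) x l : is_derive f x l -> continuity_pt f x.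
Proof.
  intros H. apply derivable_continuous_pt. exists l. apply is_derive_Reals. exact H.
Qed.

Lemma Dr (g g1 : R -> R) : (forall y, is_derive g y (g1 y)) -> forall z, Derive (fun x0 => g x0) z = g1 z.
Proof. intros H z. apply is_derive_unique. apply H. Qed.

Lemma MV (f df : R -> R) a b B :
  (forall y, Rmin a b <= y <= Rmax a b -> is_derive f y (df y)) ->
  (forall y, Rmin a b <= y <= Rmax a b -> Rabs (df y) <= B) ->
  Rabs (f b - f a) <= B * Rabs (b - a).
Proof.
  intros Hd Hb.
  destruct (MVT_gen f a b df) as [c [Hc Heq]].
  - intros y Hy. apply Hd. lra.
  - intros y Hy. apply (is_derive_cont f y (df y)). apply Hd. exact Hy.
  - rewrite Heq, Rabs_mult. apply Rmult_le_compat_r. apply Rabs_pos. apply Hb. exact Hc.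
Qed.

Lemma D2 (g g1 g2 : R -> R) M x H :
  (forall y, is_derive g y (g1 y)) -> (forall y, is_derive g1 y (g2 y)) ->
  (forall y, Rabs (g2 y) <= M) ->
  Rabs (g (x + H) + g (x - H) - 2 * g x) <= 2 * M * H ^ 2.
Proof.
  intros d1 d2 B.
  assert (HM : 0 <= M) by (specialize (B 0); pose proof (Rabs_pos (g2 0)); lra).
  set (chi := fun s => g (x + s) + g (x - s) - 2 * g x).
  set (dchi := fun s => g1 (x + s) - g1 (x - s)).
  assert (Hd : forall s, is_derive chi s (dchi s)).
  { intros s. unfold chi, dchi. auto_derive.
    - split. exists (g1 (x + s)); apply d1. split; [|exact I]. exists (g1 (x - s)); apply d1.
    - rewrite !(Dr g g1 d1). unfold Rminus. ring. }
  assert (Hb : forall s, Rmin 0 H <= s <= Rmax 0 H -> Rabs (dchi s) <= 2 * M * Rabs H).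
  { intros s Hs. unfold dchi.
    assert (Rabs s <= Rabs H).
    { unfold Rmin, Rmax in Hs. destruct (Rle_dec 0 H);
      unfold Rabs; destruct (Rcase_abs s); destruct (Rcase_abs H); lra. }
    eapply Rle_trans. apply (MV g1 g2 (x - s) (x + s) M); intros; auto.
    replace (x + s - (x - s)) with (2 * s) by ring. rewrite Rabs_mult, Rabs_right by lra.
    nra. }
  pose proof (MV chi dchi 0 H (2 * M * Rabs H) (fun y _ => Hd y) Hb) as K.
  unfold chi in K. replace (x + 0) with x in K by ring. replace (x - 0) with x in K by ring.
  replace (g (x + H) + g (x - H) - 2 * g x - (g x + g x - 2 * g x)) with
    (g (x + H) + g (x - H) - 2 * g x) in K by ring.
  eapply Rle_trans. exact K. replace (H - 0) with H by ring.
  rewrite <- (pow2_abs H). nra.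
Qed.

Lemma C3sym (g g1 g2 g3 : R -> R) M x H :
  (forall y, is_derive g y (g1 y)) -> (forall y, is_derive g1 y (g2 y)) ->
  (forall y, is_derive g2 y (g3 y)) ->
  (forall y, Rabs (g3 y) <= M) ->
  Rabs (g (x + H) - g (x - H) - 2 * H * g1 x) <= 2 * M * Rabs H ^ 3.
Proof.
  intros d1 d2 d3 B.
  assert (HM : 0 <= M) by (specialize (B 0); pose proof (Rabs_pos (g3 0)); lra).
  set (psi := fun s => g (x + s) - g (x - s) - 2 * s * g1 x).
  set (dpsi := fun s => g1 (x + s) + g1 (x - s) - 2 * g1 x).
  assert (Hd : forall s, is_derive psi s (dpsi s)).
  { intros s. unfold psi, dpsi. auto_derive.
    - split. exists (g1 (x + s)); apply d1. split; [|exact I]. exists (g1 (x - s)); apply d1.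
    - rewrite !(Dr g g1 d1). unfold Rminus. ring. }
  assert (Hb : forall s, Rmin 0 H <= s <= Rmax 0 H -> Rabs (dpsi s) <= 2 * M * H ^ 2).
  { intros s Hs. unfold dpsi.
    assert (Rabs s <= Rabs H).
    { unfold Rmin, Rmax in Hs. destruct (Rle_dec 0 H);
      unfold Rabs; destruct (Rcase_abs s); destruct (Rcase_abs H); lra. }
    eapply Rle_trans. apply (D2 g1 g2 g3 M x s); auto.
    rewrite <- (pow2_abs s), <- (pow2_abs H).
    pose proof (Rabs_pos s). 
    assert (Rabs s ^ 2 <= Rabs H ^ 2) by (simpl; nra). nra. }
  pose proof (MV psi dpsi 0 H _ (fun y _ => Hd y) Hb) as K.
  unfold psi in K. replace (x + 0) with x in K by ring. replace (x - 0) with x in K by ring.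
  replace (g (x + H) - g (x - H) - 2 * H * g1 x - (g x - g x - 2 * 0 * g1 x)) with
    (g (x + H) - g (x - H) - 2 * H * g1 x) in K by ring.
  eapply Rle_trans. exact K. replace (H - 0) with H by ring.
  rewrite <- (pow2_abs H). simpl. nra.
Qed.

Lemma T1 (f f1 f2 : R -> R) a b M :
  (forall y, Rmin a b <= y <= Rmax a b -> is_derive f y (f1 y) /\ is_derive f1 y (f2 y) /\ Rabs (f2 y) <= M) ->
  Rabs (f b - f a - (b - a) * f1 a) <= M * (b - a) ^ 2.
Proof.
  intros Hy.
  set (phi := fun y => f y - (y - a) * f1 a).
  set (dphi := fun y => f1 y - f1 a).
  assert (Hd : forall y, Rmin a b <= y <= Rmax a b -> is_derive phi y (dphi y)).
  { intros y Hy'. destruct (Hy y Hy') as [d1 _]. unfold phi, dphi. auto_derive.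
    - exists (f1 y); exact d1.
    - replace (Derive (fun x0 => f x0) y) with (f1 y) by (symmetry; apply is_derive_unique; exact d1). ring. }
  assert (Hb : forall y, Rmin a b <= y <= Rmax a b -> Rabs (dphi y) <= M * Rabs (b - a)).
  { intros y Hy'. unfold dphi.
    eapply Rle_trans. apply (MV f1 f2 a y M).
    - intros z Hz. apply Hy. unfold Rmin, Rmax in *.
      destruct (Rle_dec a b); destruct (Rle_dec a y); lra.
    - intros z Hz. apply Hy. unfold Rmin, Rmax in *.
      destruct (Rle_dec a b); destruct (Rle_dec a y); lra.
    - assert (0 <= M).
      { destruct (Hy a) as [_ [_ K]]. unfold Rmin, Rmax; destruct (Rle_dec a b); lra.
        pose proof (Rabs_pos (f2 a)); lra. }
      apply Rmult_le_compat_l; auto.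
      unfold Rmin, Rmax in Hy'. destruct (Rle_dec a b);
      unfold Rabs; destruct (Rcase_abs (y - a)); destruct (Rcase_abs (b - a)); lra. }
  pose proof (MV phi dphi a b _ Hd Hb) as K. unfold phi in K.
  replace (f b - (b - a) * f1 a - (f a - (a - a) * f1 a)) with (f b - f a - (b - a) * f1 a) in K by ring.
  eapply Rle_trans. exact K. rewrite <- (pow2_abs (b - a)). simpl. lra.
Qed.


Lemma nat_big (r : R) : exists N : nat, r < INR N /\ (1 <= N)%nat.
Proof.
  destruct (archimed (Rabs r)) as [H1 _].
  set (z := up (Rabs r)) in *.
  assert (Hz : (0 <= z)%Z).
  { apply le_IZR. pose proof (Rabs_pos r). simpl. lra. }
  exists (S (Z.to_nat z)). split; [|lia].
  rewrite S_INR, INR_IZR_INZ, Z2Nat.id by exact Hz.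
  pose proof (Rle_abs r). lra.
Qed.

Lemma bound_rect (g : R -> R -> R) a b c d :
  a <= b -> c <= d ->
  (forall x y, a <= x <= b -> c <= y <= d -> continuity_2d_pt g x y) ->
  exists M, forall x y, a <= x <= b -> c <= y <= d -> Rabs (g x y) <= M.
Proof.
  intros Hab Hcd Hc.
  destruct (uniform_continuity_2d g a b c d Hc (mkposreal 1 Rlt_0_1)) as [dl Hdl].
  destruct (nat_big (((b - a) + (d - c)) / dl)) as [N [HN HN1]].
  assert (HNp : 0 < INR N) by (apply lt_0_INR; lia).
  pose proof (cond_pos dl) as Hdp.
  assert (HN' : (b - a) + (d - c) < INR N * dl).
  { apply (Rmult_lt_compat_r dl) in HN; auto. unfold Rdiv in HN.
    rewrite Rmult_assoc, Rinv_l in HN by lra. lra. }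
  exists (Rabs (g a c) + INR N).
  intros x y Hx Hy.
  set (px := fun j : nat => a + INR j / INR N * (x - a)).
  set (py := fun j : nat => c + INR j / INR N * (y - c)).
  assert (Hin : forall j, (j <= N)%nat -> a <= px j <= b /\ c <= py j <= d).
  { intros j Hj. assert (0 <= INR j / INR N <= 1).
    { split. apply Rdiv_le_0_compat; auto. apply pos_INR.
      apply (Rmult_le_reg_r (INR N)); auto. unfold Rdiv. rewrite Rmult_assoc, Rinv_l by lra.
      rewrite Rmult_1_r, Rmult_1_l. apply le_INR; auto. }
    unfold px, py. split; split; nra. }
  assert (Hstep : forall j, Rabs (px (S j) - px j) = (x - a) / INR N /\ Rabs (py (S j) - py j) = (y - c) / INR N).
  { intros j. unfold px, py. rewrite S_INR.
    split; rewrite Rabs_right.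
    1,3: field; lra.
    1,2: apply Rle_ge; replace (c + (INR j + 1) / INR N * (y - c) - (c + INR j / INR N * (y - c))) with ((y - c) / INR N) by (field; lra);
      try replace (a + (INR j + 1) / INR N * (x - a) - (a + INR j / INR N * (x - a))) with ((x - a) / INR N) by (field; lra);
      apply Rdiv_le_0_compat; lra. }
  assert (Hsmall : (x - a) / INR N < dl /\ (y - c) / INR N < dl).
  { split; apply (Rmult_lt_reg_r (INR N)); auto; unfold Rdiv; rewrite Rmult_assoc, Rinv_l by lra; lra. }
  assert (Hind : forall j, (j <= N)%nat -> Rabs (g (px j) (py j) - g a c) <= INR j).
  { induction j as [|j IH]; intros Hj.
    - unfold px, py. simpl. replace (a + 0 / INR N * (x - a)) with a by (field; lra).
      replace (c + 0 / INR N * (y - c)) with c by (field; lra).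
      unfold Rminus. rewrite Rplus_opp_r, Rabs_R0. lra.
    - specialize (IH ltac:(lia)). rewrite S_INR.
      destruct (Hin j ltac:(lia)) as [Hxj Hyj]. destruct (Hin (S j) Hj) as [Hxs Hys].
      destruct (Hstep j) as [S1 S2].
      pose proof (Hdl (px j) (py j) (px (S j)) (py (S j)) Hxj Hyj Hxs Hys
                   ltac:(rewrite S1; lra) ltac:(rewrite S2; lra)) as K. simpl in K.
      replace (g (px (S j)) (py (S j)) - g a c) with
        ((g (px (S j)) (py (S j)) - g (px j) (py j)) + (g (px j) (py j) - g a c)) by ring.
      eapply Rle_trans. apply Rabs_triang. lra. }
  specialize (Hind N (le_n N)).
  unfold px, py in Hind.
  replace (a + INR N / INR N * (x - a)) with x in Hind by (field; lra).
  replace (c + INR N / INR N * (y - c)) with y in Hind by (field; lra).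
  pose proof (Rabs_triang_inv (g x y) (g a c)). lra.
Qed.

Lemma periodic_nat (g : R -> R -> R) L :
  (forall x t, g (x + L) t = g x t) -> forall (m : nat) x t, g (x + INR m * L) t = g x t.
Proof.
  intros H m. induction m as [|m IH]; intros x t.
  - simpl. rewrite Rmult_0_l, Rplus_0_r. reflexivity.
  - rewrite S_INR. replace (x + (INR m + 1) * L) with ((x + INR m * L) + L) by ring.
    rewrite H. apply IH.
Qed.

Lemma periodic_Z (g : R -> R -> R) L :
  (forall x t, g (x + L) t = g x t) -> forall (z : Z) x t, g (x + IZR z * L) t = g x t.
Proof.
  intros H z x t. destruct (Z_le_gt_dec 0 z) as [Hz|Hz].
  - rewrite <- (Z2Nat.id z Hz), <- INR_IZR_INZ. apply periodic_nat; auto.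
  - assert (Hz' : (0 <= - z)%Z) by lia.
    pose proof (periodic_nat g L H (Z.to_nat (- z)) (x + IZR z * L) t) as K.
    rewrite INR_IZR_INZ, Z2Nat.id, opp_IZR in K by exact Hz'.
    rewrite <- K. f_equal. ring.
Qed.

Lemma bound_strip (g : R -> R -> R) L T :
  0 < L -> 0 <= T ->
  (forall x t, g (x + L) t = g x t) ->
  (forall x t, 0 <= t <= T -> continuity_2d_pt g x t) ->
  exists M, forall x t, 0 <= t <= T -> Rabs (g x t) <= M.
Proof.
  intros HL HT Hp Hc.
  destruct (bound_rect g 0 L 0 T) as [M HM]; try lra.
  { intros x y _ Hy. apply Hc; auto. }
  exists M. intros x t Ht.
  destruct (archimed (x / L)) as [H1 H2].
  set (z := up (x / L)) in *.
  assert (E : g x t = g (x - (IZR z - 1) * L) t).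
  { rewrite <- (periodic_Z g L Hp (z - 1)%Z (x - (IZR z - 1) * L) t).
    f_equal. rewrite minus_IZR. simpl. ring. }
  rewrite E. apply HM; auto.
  assert (x = (x / L) * L) by (field; lra).
  split; nra.
Qed.

Lemma sumR_ext n f g : (forall j, (j < n)%nat -> f j = g j) -> sumR n f = sumR n g.
Proof.
  induction n; intros H; simpl; auto. rewrite IHn, H; auto.
Qed.

Lemma sumR_plus n f g : sumR n (fun j => f j + g j) = sumR n f + sumR n g.
Proof. induction n; simpl; [ring|]. rewrite IHn. ring. Qed.

Lemma sumR_minus n f g : sumR n (fun j => f j - g j) = sumR n f - sumR n g.
Proof. induction n; simpl; [ring|]. rewrite IHn. ring. Qed.

Lemma sumR_scal n c f : sumR n (fun j => c * f j) = c * sumR n f.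
Proof. induction n; simpl; [ring|]. rewrite IHn. ring. Qed.

Lemma sumR_abs_le n f (B : R) : (forall j, (j < n)%nat -> Rabs (f j) <= B) -> Rabs (sumR n f) <= INR n * B.
Proof.
  induction n; intros H; cbn [sumR].
  - rewrite Rabs_R0. simpl. lra.
  - eapply Rle_trans. apply Rabs_triang. rewrite S_INR.
    specialize (IHn (fun j Hj => H j ltac:(lia))). specialize (H n ltac:(lia)). lra.
Qed.

Lemma sumR_ge n f (m : R) : (forall j, (j < n)%nat -> m <= f j) -> INR n * m <= sumR n f.
Proof.
  induction n; intros H; cbn [sumR].
  - simpl. lra.
  - rewrite S_INR. specialize (IHn (fun j Hj => H j ltac:(lia))). specialize (H n ltac:(lia)). lra.
Qed.

Lemma fin_bound (Q : nat -> R -> Prop) n :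
  (forall i M M', Q i M -> M <= M' -> Q i M') ->
  (forall i, (i < n)%nat -> exists M, Q i M) ->
  exists M, forall i, (i < n)%nat -> Q i M.
Proof.
  intros Hm. induction n; intros H.
  - exists 0. intros; lia.
  - destruct IHn as [M1 H1]. { intros; apply H; lia. }
    destruct (H n ltac:(lia)) as [M2 H2].
    exists (Rmax M1 M2). intros i Hi.
    destruct (Nat.eq_dec i n) as [->|Hne].
    + eapply Hm. exact H2. apply Rmax_r.
    + eapply Hm. apply H1. lia. apply Rmax_l.
Qed.


Lemma Derive_shift (f : R -> R) L x : (forall y, f (y + L) = f y) -> Derive f (x + L) = Derive f x.
Proof.
  intros H. unfold Derive. f_equal. apply Lim_ext. intros y.
  replace (x + L + y) with ((x + y) + L) by ring. rewrite !H. reflexivity.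
Qed.

Lemma pd_periodic L g : periodic_x L g -> forall ds, periodic_x L (pd ds g).
Proof.
  intros Hg ds. induction ds as [|[|] ds IH]; unfold periodic_x in *; intros x t; simpl.
  - apply Hg.
  - apply Derive_shift. intros y. apply IH.
  - apply Derive_ext. intros s. apply IH.
Qed.

Lemma C3_cont g ds x t : C3 g -> (length ds <= 3)%nat -> continuity_2d_pt (pd ds g) x t.
Proof.
  intros [_ H] Hl. apply continuity_2d_pt_filterlim. apply (H ds Hl x t).
Qed.

Lemma C3_dx g ds x t : C3 g -> (length ds < 3)%nat ->
  is_derive (fun y => pd ds g y t) x (pd (true :: ds) g x t).
Proof.
  intros [H _] Hl. simpl. apply Derive_correct. apply (H ds Hl x t).
Qed.

Lemma C3_dt g ds x t : C3 g -> (length ds < 3)%nat ->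
  is_derive (fun s => pd ds g x s) t (pd (false :: ds) g x t).
Proof.
  intros [H _] Hl. simpl. apply Derive_correct. apply (H ds Hl x t).
Qed.

Lemma bound_pd L T g ds : 0 < L -> 0 <= T -> C3 g -> periodic_x L g -> (length ds <= 3)%nat ->
  exists M, forall x t, 0 <= t <= T -> Rabs (pd ds g x t) <= M.
Proof.
  intros HL HT Hc Hp Hl. apply (bound_strip _ L T HL HT).
  - apply (pd_periodic L g Hp ds).
  - intros x t _. apply C3_cont; auto.
Qed.

Lemma bound_inv L T g : 0 < L -> 0 <= T -> C3 g -> periodic_x L g ->
  (forall x t, 0 <= t <= T -> 0 < g x t) ->
  exists M, forall x t, 0 <= t <= T -> Rabs (/ g x t) <= M.
Proof.
  intros HL HT Hc Hp Hpos. apply (bound_strip (fun x t => / g x t) L T HL HT).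
  - intros x t. rewrite Hp. reflexivity.
  - intros x t Ht. apply continuity_2d_pt_inv.
    + apply (C3_cont g nil); auto.
    + specialize (Hpos x t Ht). simpl. lra.
Qed.


Definition bnd (T M : R) (g : R -> R -> R) := forall x t, 0 <= t <= T -> Rabs (g x t) <= M.

Lemma abs_prod_le a b A B : Rabs a <= A -> Rabs b <= B -> Rabs (a * b) <= A * B.
Proof.
  intros. rewrite Rabs_mult. apply Rmult_le_compat; auto; apply Rabs_pos.
Qed.

Lemma abs_div_le A h K : 0 < h -> Rabs A <= K * h -> Rabs (A / h) <= K.
Proof.
  intros Hh HA. unfold Rdiv. rewrite Rabs_mult, Rabs_inv, (Rabs_pos_eq h) by lra.
  apply (Rmult_le_reg_r h); auto. rewrite Rmult_assoc, Rinv_l by lra. lra.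
Qed.

Lemma bnd_nonneg T M g : 0 <= T -> bnd T M g -> 0 <= M.
Proof. intros HT H. specialize (H 0 0 ltac:(lra)). pose proof (Rabs_pos (g 0 0)). lra. Qed.

Lemma abs5 a b c d e : Rabs (a + b + c + d + e) <= Rabs a + Rabs b + Rabs c + Rabs d + Rabs e.
Proof.
  pose proof (Rabs_triang (a + b + c + d) e). pose proof (Rabs_triang (a + b + c) d).
  pose proof (Rabs_triang (a + b) c). pose proof (Rabs_triang a b). lra.
Qed.

Ltac dx_tac HC := match goal with
  | |- is_derive (fun y => ?P y ?t) ?x _ => exact (C3_dx P nil x t HC ltac:(simpl; lia))
  | |- is_derive (fun y => pd ?ds ?P y ?t) ?x _ => exact (C3_dx P ds x t HC ltac:(simpl; lia))
  | |- is_derive (fun s => ?P ?x s) ?t _ => exact (C3_dt P nil x t HC ltac:(simpl; lia))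
  | |- is_derive (fun s => pd ?ds ?P ?x s) ?t _ => exact (C3_dt P ds x t HC ltac:(simpl; lia))
  end.

Lemma tau1_bound (P V : R -> R -> R) (T M h dt x tk : R) :
  C3 P -> C3 V -> 0 < h -> 0 < dt -> 0 <= tk -> tk + dt <= T ->
  bnd T M P -> bnd T M (pd (true :: nil) P) -> bnd T M (pd (true :: true :: nil) P) ->
  bnd T M (pd (true :: true :: true :: nil) P) -> bnd T M (pd (false :: nil) P) ->
  bnd T M (pd (false :: false :: nil) P) -> bnd T M (pd (false :: true :: nil) P) ->
  bnd T M V -> bnd T M (pd (true :: nil) V) -> bnd T M (pd (true :: true :: nil) V) ->
  bnd T M (pd (true :: true :: true :: nil) V) ->
  Derive (fun s => P x s) (tk + dt) + Derive (fun y => P y (tk + dt) * V y (tk + dt)) x = 0 ->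
  Rabs ((P x (tk + dt) - P x tk) / dt
        + ((P x tk + P (x + h) tk) / 2 * V (x + h / 2) (tk + dt)
           - (P (x - h) tk + P x tk) / 2 * V (x - h / 2) (tk + dt)) / h)
  <= (M + 3 * M * M) * (dt + h ^ 2).
Proof.
  intros HP HV Hh Hdt Htk HT bP bP1 bP2 bP3 bPt bPtt bPxt bV bV1 bV2 bV3 Heq.
  remember (tk + dt) as t1 eqn:Et1.
  assert (HT0 : 0 <= T) by lra.
  assert (HM : 0 <= M) by (apply (bnd_nonneg T M P HT0 bP)).
  assert (S1 : 0 <= t1 <= T) by lra.
  assert (Sk : 0 <= tk <= T) by lra.
  assert (Hprod : Derive (fun y => P y t1 * V y t1) x =
                  pd (true :: nil) P x t1 * V x t1 + P x t1 * pd (true :: nil) V x t1).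
  { apply is_derive_unique.
    apply (is_derive_mult (fun y => P y t1) (fun y => V y t1)); [dx_tac HP | dx_tac HV |].
    intros; apply Rmult_comm. }
  assert (Heq' : pd (false :: nil) P x t1 + (pd (true :: nil) P x t1 * V x t1 + P x t1 * pd (true :: nil) V x t1) = 0).
  { rewrite <- Hprod. exact Heq. }
  assert (E1 : Rabs (P x tk - P x t1 - (tk - t1) * pd (false :: nil) P x t1) <= M * (tk - t1) ^ 2).
  { apply (T1 (fun s => P x s) (fun s => pd (false :: nil) P x s) (fun s => pd (false :: false :: nil) P x s)).
    intros y Hy. assert (0 <= y <= T) by (unfold Rmin, Rmax in *; destruct Rle_dec; lra).
    split; [dx_tac HP|]. split; [dx_tac HP|]. apply bPtt; auto. }
  assert (E1' : Rabs ((P x t1 - P x tk) / dt - pd (false :: nil) P x t1) <= M * dt).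
  { replace ((P x t1 - P x tk) / dt - pd (false :: nil) P x t1) with (- (P x tk - P x t1 - (tk - t1) * pd (false :: nil) P x t1) / dt)
      by (rewrite Et1; field; lra).
    apply abs_div_le; auto. rewrite Rabs_Ropp.
    replace ((tk - t1) ^ 2) with (dt * dt) in E1 by (rewrite Et1; ring). lra. }
  assert (E2 : Rabs (V (x + h / 2) t1 - V (x - h / 2) t1 - 2 * (h / 2) * pd (true :: nil) V x t1) <= 2 * M * Rabs (h / 2) ^ 3).
  { apply (C3sym (fun y => V y t1) (fun y => pd (true :: nil) V y t1) (fun y => pd (true :: true :: nil) V y t1)
                 (fun y => pd (true :: true :: true :: nil) V y t1)); intros y; try dx_tac HV. apply bV3; auto. }
  rewrite (Rabs_pos_eq (h / 2)) in E2 by lra.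
  assert (E2' : Rabs ((V (x + h / 2) t1 - V (x - h / 2) t1) / h - pd (true :: nil) V x t1) <= M / 4 * h ^ 2).
  { replace ((V (x + h / 2) t1 - V (x - h / 2) t1) / h - pd (true :: nil) V x t1) with
      ((V (x + h / 2) t1 - V (x - h / 2) t1 - 2 * (h / 2) * pd (true :: nil) V x t1) / h) by (field; lra).
    apply abs_div_le; auto. replace (M / 4 * h ^ 2 * h) with (2 * M * (h / 2) ^ 3) by field. exact E2. }
  assert (E3 : Rabs (V (x + h / 2) t1 + V (x - h / 2) t1 - 2 * V x t1) <= 2 * M * (h / 2) ^ 2).
  { apply (D2 (fun y => V y t1) (fun y => pd (true :: nil) V y t1) (fun y => pd (true :: true :: nil) V y t1));
      intros y; try dx_tac HV. apply bV2; auto. }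
  assert (E3' : Rabs ((V (x + h / 2) t1 + V (x - h / 2) t1) / 2 - V x t1) <= M / 4 * h ^ 2).
  { replace ((V (x + h / 2) t1 + V (x - h / 2) t1) / 2 - V x t1) with
      ((V (x + h / 2) t1 + V (x - h / 2) t1 - 2 * V x t1) / 2) by field.
    apply abs_div_le; [lra|]. replace (M / 4 * h ^ 2 * 2) with (2 * M * (h / 2) ^ 2) by field. exact E3. }
  assert (E4 : Rabs (P (x + h) tk - P (x - h) tk - 2 * h * pd (true :: nil) P x tk) <= 2 * M * Rabs h ^ 3).
  { apply (C3sym (fun y => P y tk) (fun y => pd (true :: nil) P y tk) (fun y => pd (true :: true :: nil) P y tk)
                 (fun y => pd (true :: true :: true :: nil) P y tk)); intros y; try dx_tac HP. apply bP3; auto. }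
  rewrite (Rabs_pos_eq h) in E4 by lra.
  assert (E4' : Rabs (((P x tk + P (x + h) tk) / 2 - (P (x - h) tk + P x tk) / 2) / h - pd (true :: nil) P x tk) <= M * h ^ 2).
  { replace (((P x tk + P (x + h) tk) / 2 - (P (x - h) tk + P x tk) / 2) / h - pd (true :: nil) P x tk) with
      (((P (x + h) tk - P (x - h) tk - 2 * h * pd (true :: nil) P x tk) / 2) / h) by (field; lra).
    apply abs_div_le; [lra|]. apply abs_div_le; [lra|]. replace (M * h ^ 2 * h * 2) with (2 * M * h ^ 3) by ring. exact E4. }
  assert (E5 : Rabs (P (x + h) tk + P (x - h) tk - 2 * P x tk) <= 2 * M * h ^ 2).
  { apply (D2 (fun y => P y tk) (fun y => pd (true :: nil) P y tk) (fun y => pd (true :: true :: nil) P y tk));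
      intros y; try dx_tac HP. apply bP2; auto. }
  assert (E5' : Rabs (((P x tk + P (x + h) tk) / 2 + (P (x - h) tk + P x tk) / 2) / 2 - P x tk) <= M / 2 * h ^ 2).
  { replace (((P x tk + P (x + h) tk) / 2 + (P (x - h) tk + P x tk) / 2) / 2 - P x tk) with
      ((P (x + h) tk + P (x - h) tk - 2 * P x tk) / 4) by field.
    apply abs_div_le; [lra|]. replace (M / 2 * h ^ 2 * 4) with (2 * M * h ^ 2) by field. exact E5. }
  assert (E6 : Rabs (pd (true :: nil) P x t1 - pd (true :: nil) P x tk) <= M * dt).
  { eapply Rle_trans.
    2:{ apply Rmult_le_compat_l; [exact HM|]. apply (Req_le (Rabs (t1 - tk)) dt). rewrite Rabs_pos_eq; lra. }
    apply (MV (fun s => pd (true :: nil) P x s) (fun s => pd (false :: true :: nil) P x s) tk t1 M); intros y Hy;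
    assert (0 <= y <= T) by (unfold Rmin, Rmax in *; destruct Rle_dec; lra).
    dx_tac HP. apply bPxt; auto. }
  assert (E7 : Rabs (P x t1 - P x tk) <= M * dt).
  { eapply Rle_trans.
    2:{ apply Rmult_le_compat_l; [exact HM|]. apply (Req_le (Rabs (t1 - tk)) dt). rewrite Rabs_pos_eq; lra. }
    apply (MV (fun s => P x s) (fun s => pd (false :: nil) P x s) tk t1 M); intros y Hy;
    assert (0 <= y <= T) by (unfold Rmin, Rmax in *; destruct Rle_dec; lra).
    dx_tac HP. apply bPt; auto. }
  set (ab := ((P x tk + P (x + h) tk) / 2 + (P (x - h) tk + P x tk) / 2) / 2) in *.
  set (vb := (V (x + h / 2) t1 + V (x - h / 2) t1) / 2) in *.
  set (X := (V (x + h / 2) t1 - V (x - h / 2) t1) / h) in *.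
  set (Z := ((P x tk + P (x + h) tk) / 2 - (P (x - h) tk + P x tk) / 2) / h) in *.
  set (Pt := pd (false :: nil) P x t1) in *.
  set (Px1 := pd (true :: nil) P x t1) in *.
  set (Pxk := pd (true :: nil) P x tk) in *.
  set (Vx := pd (true :: nil) V x t1) in *.
  assert (Id : (P x t1 - P x tk) / dt
        + ((P x tk + P (x + h) tk) / 2 * V (x + h / 2) t1
           - (P (x - h) tk + P x tk) / 2 * V (x - h / 2) t1) / h
     = ((P x t1 - P x tk) / dt - Pt) + ab * (X - Vx) + (ab - P x t1) * Vx + vb * (Z - Px1) + (vb - V x t1) * Px1
       + (Pt + (Px1 * V x t1 + P x t1 * Vx))).
  { unfold ab, vb, X, Z. field. lra. }
  rewrite Id, Heq', Rplus_0_r.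
  assert (Bab : Rabs ab <= M).
  { pose proof (bP x tk Sk). pose proof (bP (x + h) tk Sk). pose proof (bP (x - h) tk Sk).
    apply Rabs_le. unfold ab. 
    revert H H0 H1. unfold Rabs. repeat destruct Rcase_abs; intros; lra. }
  assert (Bvb : Rabs vb <= M).
  { pose proof (bV (x + h / 2) t1 S1). pose proof (bV (x - h / 2) t1 S1).
    apply Rabs_le. unfold vb. 
    revert H H0. unfold Rabs. repeat destruct Rcase_abs; intros; lra. }
  assert (Bab2 : Rabs (ab - P x t1) <= M / 2 * h ^ 2 + M * dt).
  { replace (ab - P x t1) with ((ab - P x tk) - (P x t1 - P x tk)) by ring.
    eapply Rle_trans. apply Rabs_triang. rewrite Rabs_Ropp. lra. }
  assert (BZ : Rabs (Z - Px1) <= M * h ^ 2 + M * dt).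
  { replace (Z - Px1) with ((Z - Pxk) - (Px1 - Pxk)) by ring.
    eapply Rle_trans. apply Rabs_triang. rewrite Rabs_Ropp. lra. }
  pose proof (abs_prod_le _ _ _ _ Bab E2') as F1.
  pose proof (abs_prod_le _ _ _ _ Bab2 (bV1 x t1 S1)) as F2.
  pose proof (abs_prod_le _ _ _ _ Bvb BZ) as F3.
  pose proof (abs_prod_le _ _ _ _ E3' (bP1 x t1 S1)) as F4.
  fold Vx in F2. fold Px1 in F4.
  eapply Rle_trans; [apply abs5|].
  assert (0 <= M * M * dt) by (apply Rmult_le_pos; [apply Rmult_le_pos|]; lra).
  assert (0 <= M * M * h ^ 2) by (apply Rmult_le_pos; [apply Rmult_le_pos|]; nra).
  assert (0 <= M * h ^ 2) by nra.
  nra.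
Qed.


Lemma ln_derivs (p p1 p2 p3 : R -> R) :
  (forall y, is_derive p y (p1 y)) -> (forall y, is_derive p1 y (p2 y)) ->
  (forall y, is_derive p2 y (p3 y)) -> (forall y, 0 < p y) ->
  (forall y, is_derive (fun z => ln (p z)) y (p1 y * / p y)) /\
  (forall y, is_derive (fun z => p1 z * / p z) y (p2 y * / p y - p1 y * p1 y * (/ p y * / p y))) /\
  (forall y, is_derive (fun z => p2 z * / p z - p1 z * p1 z * (/ p z * / p z)) y
     (p3 y * / p y - 3 * p1 y * p2 y * (/ p y * / p y) + 2 * (p1 y * p1 y * p1 y) * (/ p y * / p y * / p y))).
Proof.
  intros d1 d2 d3 pos.
  split; [|split]; intros y; specialize (pos y); auto_derive;
  repeat split; try lra;
  try (exists (p1 y); apply d1); try (exists (p2 y); apply d2); try (exists (p3 y); apply d3);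
  rewrite ?(Dr p p1 d1), ?(Dr p1 p2 d2), ?(Dr p2 p3 d3); field; lra.
Qed.

Lemma mono_mul x y X Y : 0 <= x <= X -> 0 <= y <= Y -> 0 <= x * y <= X * Y.
Proof. intros. split. apply Rmult_le_pos; lra. apply Rmult_le_compat; lra. Qed.

Lemma g3_bound a b c w M : Rabs a <= M -> Rabs b <= M -> Rabs c <= M -> Rabs w <= M ->
  Rabs (c * w - 3 * a * b * (w * w) + 2 * (a * a * a) * (w * w * w))
  <= M * M + 3 * (M * M * (M * M)) + 2 * (M * M * M * (M * M * M)).
Proof.
  intros Ha Hb Hc Hw.
  pose proof (Rabs_pos a). pose proof (Rabs_pos b). pose proof (Rabs_pos c). pose proof (Rabs_pos w).
  assert (X1 := mono_mul _ _ _ _ (conj (Rabs_pos c) Hc) (conj (Rabs_pos w) Hw)).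
  assert (X2 := mono_mul _ _ _ _ (conj (Rabs_pos a) Ha) (conj (Rabs_pos b) Hb)).
  assert (X3 := mono_mul _ _ _ _ (conj (Rabs_pos w) Hw) (conj (Rabs_pos w) Hw)).
  assert (X4 := mono_mul _ _ _ _ X2 X3).
  assert (X5 := mono_mul _ _ _ _ X2 (conj (Rabs_pos a) Ha)).
  assert (X5' : 0 <= Rabs a * Rabs a * Rabs a <= M * M * M).
  { assert (Y := mono_mul _ _ _ _ (conj (Rabs_pos a) Ha) (conj (Rabs_pos a) Ha)).
    apply (mono_mul _ _ _ _ Y (conj (Rabs_pos a) Ha)). }
  assert (X6 := mono_mul _ _ _ _ X3 (conj (Rabs_pos w) Hw)).
  assert (X7 := mono_mul _ _ _ _ X5' X6).
  unfold Rminus.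
  eapply Rle_trans. apply Rabs_triang.
  eapply Rle_trans. apply Rplus_le_compat_r. apply Rabs_triang.
  rewrite Rabs_Ropp, !Rabs_mult, (Rabs_pos_eq 3), (Rabs_pos_eq 2) by lra.
  lra.
Qed.

Lemma perj (P : R -> R -> R) (T M h dt e tk : R) :
  C3 P -> 0 < h -> 0 < dt -> 0 <= tk -> tk + dt <= T -> 0 < M ->
  bnd T M P -> bnd T M (pd (true :: nil) P) -> bnd T M (pd (true :: true :: nil) P) ->
  bnd T M (pd (true :: true :: true :: nil) P) -> bnd T M (pd (false :: nil) P) ->
  bnd T M (fun x t => / P x t) ->
  (forall x t, 0 <= t <= T -> 0 < P x t) ->
  let A := (P (e - h / 2) tk + P (e + h / 2) tk) / 2 in
  let D := (ln (P (e + h / 2) (tk + dt)) - ln (P (e - h / 2) (tk + dt))) / h in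
  let lam := pd (true :: nil) P e (tk + dt) * / P e (tk + dt) in
  let G := (M * M + 3 * (M * M * (M * M)) + 2 * (M * M * M * (M * M * M))) / 4 in
  Rabs (A - P e (tk + dt)) <= M * (dt + h ^ 2) /\
  / M <= A /\ / M <= P e (tk + dt) /\ Rabs A <= M /\
  Derive (fun y => ln (P y (tk + dt))) e = lam /\
  Rabs (D - lam) <= G * (dt + h ^ 2) /\
  Rabs lam <= M * M /\ Rabs D <= M * M.
Proof.
  intros HP Hh Hdt Htk HT HM bP bP1 bP2 bP3 bPt bI pos A D lam G.
  remember (tk + dt) as t1 eqn:Et1.
  assert (S1 : 0 <= t1 <= T) by lra.
  assert (Sk : 0 <= tk <= T) by lra.
  assert (lowP : forall x t, 0 <= t <= T -> / M <= P x t).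
  { intros x t Ht. specialize (pos x t Ht). specialize (bI x t Ht). simpl in bI.
    rewrite Rabs_pos_eq in bI by (left; apply Rinv_0_lt_compat; lra).
    rewrite <- (Rinv_inv (P x t)). apply Rinv_le_contravar; auto. apply Rinv_0_lt_compat; lra. }
  assert (E1 : Rabs (P (e + h / 2) tk + P (e - h / 2) tk - 2 * P e tk) <= 2 * M * (h / 2) ^ 2).
  { apply (D2 (fun y => P y tk) (fun y => pd (true :: nil) P y tk) (fun y => pd (true :: true :: nil) P y tk));
      intros y; try dx_tac HP. apply bP2; auto. }
  assert (E2 : Rabs (P e t1 - P e tk) <= M * dt).
  { eapply Rle_trans.
    2:{ apply Rmult_le_compat_l; [lra|]. apply (Req_le (Rabs (t1 - tk)) dt). rewrite Rabs_pos_eq; lra. }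
    apply (MV (fun s => P e s) (fun s => pd (false :: nil) P e s) tk t1 M); intros y Hy;
    assert (0 <= y <= T) by (unfold Rmin, Rmax in *; destruct Rle_dec; lra).
    dx_tac HP. apply bPt; auto. }
  split.
  { replace (A - P e t1) with ((P (e + h / 2) tk + P (e - h / 2) tk - 2 * P e tk) / 2 - (P e t1 - P e tk))
      by (unfold A; field).
    eapply Rle_trans. apply Rabs_triang. rewrite Rabs_Ropp.
    unfold Rdiv at 1. rewrite Rabs_mult, (Rabs_pos_eq (/ 2)) by lra.
    assert (0 <= M * h ^ 2) by (apply Rmult_le_pos; [lra| apply pow2_ge_0]). 
    replace (2 * M * (h / 2) ^ 2) with (M * h ^ 2 / 2) in E1 by field. lra. }
  pose proof (lowP (e - h / 2) tk Sk). pose proof (lowP (e + h / 2) tk Sk).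
  split. { unfold A. lra. }
  split. { apply lowP; auto. }
  split.
  { pose proof (bP (e - h / 2) tk Sk). pose proof (bP (e + h / 2) tk Sk).
    apply Rabs_le. unfold A. revert H1 H2. unfold Rabs. repeat destruct Rcase_abs; intros; lra. }
  assert (posy : forall y, 0 < P y t1) by (intros; apply pos; auto).
  destruct (ln_derivs (fun y => P y t1) (fun y => pd (true :: nil) P y t1) (fun y => pd (true :: true :: nil) P y t1)
              (fun y => pd (true :: true :: true :: nil) P y t1)) as [L1 [L2 L3]].
  { intros y; dx_tac HP. }
  { intros y; dx_tac HP. }
  { intros y; dx_tac HP. }
  { exact posy. }
  split. { apply is_derive_unique. apply L1. }
  assert (Bw : forall y, Rabs (/ P y t1) <= M) by (intros y; apply (bI y t1 S1)).
  split.
  { pose proof (C3sym _ _ _ _ ((M * M + 3 * (M * M * (M * M)) + 2 * (M * M * M * (M * M * M)))) e (h / 2) L1 L2 L3) as K.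
    assert (K' : Rabs (ln (P (e + h / 2) t1) - ln (P (e - h / 2) t1) - 2 * (h / 2) * (pd (true :: nil) P e t1 * / P e t1))
                 <= 2 * (M * M + 3 * (M * M * (M * M)) + 2 * (M * M * M * (M * M * M))) * Rabs (h / 2) ^ 3).
    { apply K. intros y. exact (g3_bound _ _ _ _ M (bP1 y t1 S1) (bP2 y t1 S1) (bP3 y t1 S1) (Bw y)). }
    rewrite (Rabs_pos_eq (h / 2)) in K' by lra.
    unfold D, lam, G.
    replace ((ln (P (e + h / 2) t1) - ln (P (e - h / 2) t1)) / h - pd (true :: nil) P e t1 * / P e t1) with
      ((ln (P (e + h / 2) t1) - ln (P (e - h / 2) t1) - 2 * (h / 2) * (pd (true :: nil) P e t1 * / P e t1)) / h)
      by (pose proof (posy e); field; repeat split; lra).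
    eapply Rle_trans. apply abs_div_le. exact Hh.
    eapply Rle_trans. exact K'. apply Req_le.
    instantiate (1 := (M * M + 3 * (M * M * (M * M)) + 2 * (M * M * M * (M * M * M))) / 4 * h ^ 2). field.
    assert (0 <= M * M + 3 * (M * M * (M * M)) + 2 * (M * M * M * (M * M * M))).
    { assert (0 <= M * M) by (apply Rmult_le_pos; lra). assert (0 <= M * M * M) by (apply Rmult_le_pos; lra).
      assert (0 <= M * M * (M * M)) by (apply Rmult_le_pos; lra).
      assert (0 <= M * M * M * (M * M * M)) by (apply Rmult_le_pos; lra). lra. }
    apply Rmult_le_compat_l; lra. }
  assert (Blam : forall y, Rabs (pd (true :: nil) P y t1 * / P y t1) <= M * M).
  { intros y. apply abs_prod_le; [apply bP1; auto | apply Bw]. }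
  split. { apply Blam. }
  unfold D. apply abs_div_le; auto.
  eapply Rle_trans.
  { apply (MV (fun z => ln (P z t1)) (fun y => pd (true :: nil) P y t1 * / P y t1) (e - h / 2) (e + h / 2) (M * M)); intros; auto. }
  apply Req_le. rewrite Rabs_pos_eq by lra. field.
Qed.


Lemma tau3_alg n (A Pe v : nat -> R) M w :
  (forall j, (j < n)%nat -> Rabs (A j - Pe j) <= M * w /\ Rabs (v j) <= M) ->
  sumR n (fun j => Pe j * v j) = 0 ->
  Rabs (sumR n (fun j => A j * v j)) <= INR n * (M * w * M).
Proof.
  intros H Heq.
  rewrite (sumR_ext n _ (fun j => (A j - Pe j) * v j + Pe j * v j)) by (intros; ring).
  rewrite sumR_plus, Heq, Rplus_0_r.
  apply sumR_abs_le. intros j Hj. destruct (H j Hj). apply abs_prod_le; auto.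
Qed.

Lemma inv_sum_le n (A : nat -> R) M : (1 <= n)%nat -> 0 < M -> (forall j, (j < n)%nat -> / M <= A j) ->
  0 < sumR n A /\ Rabs (/ sumR n A) <= M.
Proof.
  intros Hn HM H.
  pose proof (sumR_ge n A (/ M) H).
  assert (1 <= INR n) by (apply (le_INR 1); lia).
  assert (0 < / M) by (apply Rinv_0_lt_compat; lra).
  assert (/ M <= sumR n A) by nra.
  split. lra.
  rewrite Rabs_pos_eq by (left; apply Rinv_0_lt_compat; lra).
  rewrite <- (Rinv_inv M). apply Rinv_le_contravar; auto.
Qed.

Lemma tau2_alg n (A D Pe lam v bi : nat -> R) (vi : R) (i : nat) (M G B w : R) :
  (1 <= n)%nat -> 0 < M -> 0 <= w -> (i < n)%nat -> vi = v i ->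
  (forall j, (j < n)%nat ->
     Rabs (A j) <= M /\ / M <= A j /\ / M <= Pe j /\ Rabs (D j - lam j) <= G * w /\
     Rabs (lam j) <= M * M /\ Rabs (D j) <= M * M /\ Rabs (A j - Pe j) <= M * w /\
     Rabs (v j) <= M /\ Rabs (bi j) <= B) ->
  - sumR n (fun j => bi j * Pe j * (vi - v j)) = lam i - / sumR n Pe * sumR n (fun j => Pe j * lam j) ->
  Rabs (D i - / sumR n A * sumR n (fun j => A j * D j) + sumR n (fun j => bi j * A j * (vi - v j)))
  <= (G + INR n * (M * M * M) * (INR n * (M * (M * M)))
        + M * (INR n * (M * G + M * (M * M))) + INR n * (B * M * (2 * M))) * w.
Proof.
  intros Hn HM Hw Hi Hvi H Heq.
  destruct (inv_sum_le n A M Hn HM (fun j Hj => proj1 (proj2 (H j Hj)))) as [SA IA].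
  destruct (inv_sum_le n Pe M Hn HM (fun j Hj => proj1 (proj2 (proj2 (H j Hj))))) as [SP IP].
  set (S := sumR n A) in *. set (S0 := sumR n Pe) in *.
  assert (Id : D i - / S * sumR n (fun j => A j * D j) + sumR n (fun j => bi j * A j * (vi - v j))
     = (D i - lam i) - ((S0 - S) * / S * / S0) * sumR n (fun j => A j * D j)
       - / S0 * sumR n (fun j => A j * (D j - lam j) + (A j - Pe j) * lam j)
       + sumR n (fun j => bi j * (A j - Pe j) * (vi - v j))
       + (lam i - / S0 * sumR n (fun j => Pe j * lam j) + sumR n (fun j => bi j * Pe j * (vi - v j)))).
  { rewrite (sumR_ext n (fun j => A j * (D j - lam j) + (A j - Pe j) * lam j) (fun j => A j * D j - Pe j * lam j))
      by (intros; ring).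
    rewrite (sumR_ext n (fun j => bi j * (A j - Pe j) * (vi - v j))
                        (fun j => bi j * A j * (vi - v j) - bi j * Pe j * (vi - v j))) by (intros; ring).
    rewrite !sumR_minus. field. split; lra. }
  rewrite Id. rewrite <- Heq.
  replace (- sumR n (fun j => bi j * Pe j * (vi - v j)) + sumR n (fun j => bi j * Pe j * (vi - v j))) with 0 by ring.
  rewrite Rplus_0_r.
  destruct (H i Hi) as [_ [_ [_ [Hi1 _]]]].
  assert (B2 : Rabs ((S0 - S) * / S * / S0) <= INR n * (M * w) * M * M).
  { apply abs_prod_le; [apply abs_prod_le|]; auto.
    unfold S0, S. rewrite <- sumR_minus. apply sumR_abs_le. intros j Hj.
    destruct (H j Hj) as [_ [_ [_ [_ [_ [_ [K _]]]]]]]. rewrite <- Rabs_Ropp.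
    replace (- (Pe j - A j)) with (A j - Pe j) by ring. exact K. }
  assert (B3 : Rabs (sumR n (fun j => A j * D j)) <= INR n * (M * (M * M))).
  { apply sumR_abs_le. intros j Hj. destruct (H j Hj) as [K1 [_ [_ [_ [_ [K2 _]]]]]]. apply abs_prod_le; auto. }
  assert (B4 : Rabs (/ S0 * sumR n (fun j => A j * (D j - lam j) + (A j - Pe j) * lam j))
               <= M * (INR n * (M * (G * w) + M * w * (M * M)))).
  { apply abs_prod_le; auto. apply sumR_abs_le. intros j Hj.
    destruct (H j Hj) as [K1 [_ [_ [K4 [K5 [_ [K7 _]]]]]]].
    eapply Rle_trans. apply Rabs_triang. apply Rplus_le_compat; apply abs_prod_le; auto. }
  assert (B5 : Rabs (sumR n (fun j => bi j * (A j - Pe j) * (vi - v j))) <= INR n * (B * (M * w) * (2 * M))).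
  { apply sumR_abs_le. intros j Hj.
    destruct (H j Hj) as [_ [_ [_ [_ [_ [_ [K7 [K8 K9]]]]]]]].
    destruct (H i Hi) as [_ [_ [_ [_ [_ [_ [_ [K10 _]]]]]]]].
    apply abs_prod_le; [apply abs_prod_le; auto|].
    rewrite Hvi. unfold Rminus. eapply Rle_trans. apply Rabs_triang. rewrite Rabs_Ropp. lra. }
  pose proof (abs_prod_le _ _ _ _ B2 B3) as B23.
  unfold Rminus at 1 2.
  eapply Rle_trans. apply Rabs_triang.
  eapply Rle_trans. apply Rplus_le_compat_r. apply Rabs_triang.
  eapply Rle_trans. apply Rplus_le_compat_r. apply Rplus_le_compat_r. apply Rabs_triang.
  rewrite !Rabs_Ropp.
  lra.
Qed.


Lemma bnd_mono T M M' g : bnd T M g -> M <= M' -> bnd T M' g.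
Proof. intros H HM x t Ht. specialize (H x t Ht). lra. Qed.

Definition Qb (T : R) (P V : R -> R -> R) (M : R) : Prop :=
  0 < M /\ bnd T M P /\ bnd T M (pd (true :: nil) P) /\ bnd T M (pd (true :: true :: nil) P) /\
  bnd T M (pd (true :: true :: true :: nil) P) /\ bnd T M (pd (false :: nil) P) /\
  bnd T M (pd (false :: false :: nil) P) /\ bnd T M (pd (false :: true :: nil) P) /\
  bnd T M (fun x t => / P x t) /\
  bnd T M V /\ bnd T M (pd (true :: nil) V) /\ bnd T M (pd (true :: true :: nil) V) /\
  bnd T M (pd (true :: true :: true :: nil) V).

Lemma Qb_mono T P V M M' : Qb T P V M -> M <= M' -> Qb T P V M'.
Proof.
  unfold Qb. intros [H0 [H1 [H2 [H3 [H4 [H5 [H6 [H7 [H8 [H9 [H10 [H11 H12]]]]]]]]]]]] HM.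
  repeat split; try lra; eapply bnd_mono; eauto.
Qed.

Ltac mx := first [ apply Rle_refl | apply Rmax_l | eapply Rle_trans; [ | apply Rmax_r]; mx ].

Lemma Qb_ex L T P V : 0 < L -> 0 <= T -> C3 P -> C3 V -> periodic_x L P -> periodic_x L V ->
  (forall x t, 0 <= t <= T -> 0 < P x t) -> exists M, Qb T P V M.
Proof.
  intros HL HT CP CV pP pV pos.
  destruct (bound_pd L T P nil HL HT CP pP ltac:(simpl; lia)) as [M1 H1].
  destruct (bound_pd L T P (true :: nil) HL HT CP pP ltac:(simpl; lia)) as [M2 H2].
  destruct (bound_pd L T P (true :: true :: nil) HL HT CP pP ltac:(simpl; lia)) as [M3 H3].
  destruct (bound_pd L T P (true :: true :: true :: nil) HL HT CP pP ltac:(simpl; lia)) as [M4 H4].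
  destruct (bound_pd L T P (false :: nil) HL HT CP pP ltac:(simpl; lia)) as [M5 H5].
  destruct (bound_pd L T P (false :: false :: nil) HL HT CP pP ltac:(simpl; lia)) as [M6 H6].
  destruct (bound_pd L T P (false :: true :: nil) HL HT CP pP ltac:(simpl; lia)) as [M7 H7].
  destruct (bound_inv L T P HL HT CP pP pos) as [M8 H8].
  destruct (bound_pd L T V nil HL HT CV pV ltac:(simpl; lia)) as [M9 H9].
  destruct (bound_pd L T V (true :: nil) HL HT CV pV ltac:(simpl; lia)) as [M10 H10].
  destruct (bound_pd L T V (true :: true :: nil) HL HT CV pV ltac:(simpl; lia)) as [M11 H11].
  destruct (bound_pd L T V (true :: true :: true :: nil) HL HT CV pV ltac:(simpl; lia)) as [M12 H12].
  set (M := Rmax 1 (Rmax M1 (Rmax M2 (Rmax M3 (Rmax M4 (Rmax M5 (Rmax M6 (Rmax M7 (Rmax M8 (Rmax M9 (Rmax M10 (Rmax M11 M12)))))))))))).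
  exists M. unfold Qb.
  split. { assert (1 <= M) by (unfold M; mx). lra. }
  all: repeat split.
  all: eapply bnd_mono; [eassumption|].
  all: unfold M; mx.
Qed.


Theorem lemma2p5 (n : nat) (L T : R) (b : nat -> nat -> R)
    (P V : nat -> R -> R -> R) :
  (2 <= n)%nat -> 0 < L -> 0 < T ->
  (forall i, (i < n)%nat -> C3 (P i) /\ C3 (V i)) ->
  (forall i, (i < n)%nat -> periodic_x L (P i) /\ periodic_x L (V i)) ->
  (forall i, (i < n)%nat -> forall x t, 0 <= t <= T -> 0 < P i x t) ->
  (forall x, sumR n (fun j => P j x 0) = 1) ->
  is_solution n T b P V ->
  exists C : R, 0 < C /\
    forall (N : nat) (dt : R) (k : nat),
      (1 <= N)%nat -> 0 < dt -> INR (S k) * dt <= T ->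
      let h := L / INR N in
      forall l : Z,
        (forall i, (i < n)%nat ->
           Rabs (tau1 P V h dt k i l) <= C * (dt + h ^ 2) /\
           Rabs (tau2 n b P V h dt k i l) <= C * (dt + h ^ 2)) /\
        Rabs (tau3 n P V h dt k l) <= C * (dt + h ^ 2).
Proof.
  intros Hn HL HT HC Hper Hpos _ Hsol.
  destruct (fin_bound (fun i M => Qb T (P i) (V i) M) n) as [M HM].
  { intros i M M' H1 H2. eapply Qb_mono; eauto. }
  { intros i Hi. destruct (HC i Hi), (Hper i Hi). apply Qb_ex with L; auto; try lra. }
  destruct (fin_bound (fun i B => forall j, (j < n)%nat -> Rabs (b i j) <= B) n) as [B HB].
  { intros i M1 M2 H1 H2 j Hj. specialize (H1 j Hj). lra. }
  { intros i Hi. apply (fin_bound (fun j B => Rabs (b i j) <= B) n).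
    { intros j M1 M2 H1 H2. lra. }
    intros j _. exists (Rabs (b i j)). lra. }
  assert (HM0 : 0 < M) by (destruct (HM 0%nat ltac:(lia)); auto).
  set (G := (M * M + 3 * (M * M * (M * M)) + 2 * (M * M * M * (M * M * M))) / 4).
  set (K1 := M + 3 * M * M).
  set (K2 := G + INR n * (M * M * M) * (INR n * (M * (M * M)))
        + M * (INR n * (M * G + M * (M * M))) + INR n * (B * M * (2 * M))).
  set (K3 := INR n * (M * M)).
  exists (Rabs K1 + Rabs K2 + Rabs K3 + 1).
  split. { pose proof (Rabs_pos K1); pose proof (Rabs_pos K2); pose proof (Rabs_pos K3); lra. }
  intros N dt k HN Hdt Hk h l.
  assert (HNp : 0 < INR N) by (apply lt_0_INR; lia).
  assert (Hh : 0 < h) by (unfold h; apply Rdiv_lt_0_compat; lra).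
  set (tk := INR k * dt).
  assert (Et : INR (S k) * dt = tk + dt) by (unfold tk; rewrite S_INR; ring).
  assert (Htk : 0 <= tk) by (unfold tk; apply Rmult_le_pos; [apply pos_INR | lra]).
  assert (HT1 : tk + dt <= T) by lra.
  assert (Hw : 0 <= dt + h ^ 2) by (pose proof (pow2_ge_0 h); lra).
  assert (Up : forall K z, z <= K * (dt + h ^ 2) -> (K = K1 \/ K = K2 \/ K = K3) ->
             z <= (Rabs K1 + Rabs K2 + Rabs K3 + 1) * (dt + h ^ 2)).
  { intros K z Hz HK. eapply Rle_trans. exact Hz. apply Rmult_le_compat_r; auto.
    pose proof (Rabs_pos K1); pose proof (Rabs_pos K2); pose proof (Rabs_pos K3).
    destruct HK as [E|[E|E]]; rewrite E; [pose proof (Rle_abs K1)|pose proof (Rle_abs K2)|pose proof (Rle_abs K3)]; lra. }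
  set (e := (IZR l + / 2) * h).
  assert (Ee0 : IZR l * h = e - h / 2) by (unfold e; field).
  assert (Ee1 : IZR (l + 1) * h = e + h / 2) by (unfold e; rewrite plus_IZR; field).
  assert (PJ : forall j, (j < n)%nat ->
    let A := (P j (e - h / 2) tk + P j (e + h / 2) tk) / 2 in
    let D := (ln (P j (e + h / 2) (tk + dt)) - ln (P j (e - h / 2) (tk + dt))) / h in
    let lam := pd (true :: nil) (P j) e (tk + dt) * / P j e (tk + dt) in
    Rabs (A - P j e (tk + dt)) <= M * (dt + h ^ 2) /\
    / M <= A /\ / M <= P j e (tk + dt) /\ Rabs A <= M /\
    Derive (fun y => ln (P j y (tk + dt))) e = lam /\
    Rabs (D - lam) <= G * (dt + h ^ 2) /\
    Rabs lam <= M * M /\ Rabs D <= M * M).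
  { intros j Hj. destruct (HM j Hj) as [_ [b1 [b2 [b3 [b4 [b5 [b6 [b7 [b8 [b9 [b10 [b11 b12]]]]]]]]]]]].
    destruct (HC j Hj) as [CP CV].
    exact (perj (P j) T M h dt e tk CP Hh Hdt Htk HT1 HM0 b1 b2 b3 b4 b5 b8 (Hpos j Hj)). }
  split.
  - intros i Hi. destruct (HM i Hi) as [_ [b1 [b2 [b3 [b4 [b5 [b6 [b7 [b8 [b9 [b10 [b11 b12]]]]]]]]]]]].
    destruct (HC i Hi) as [CP CV].
    split.
    + apply (Up K1); [|left; reflexivity].
      unfold tau1, Phat, Pc, Ve.
      replace (l - 1 + 1)%Z with l by ring.
      rewrite plus_IZR, minus_IZR, Et. change (INR k * dt) with tk.
      set (x := IZR l * h).
      replace ((IZR l + 1) * h) with (x + h) by (unfold x; ring).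
      replace ((IZR l - 1) * h) with (x - h) by (unfold x; ring).
      replace ((IZR l + / 2) * h) with (x + h / 2) by (unfold x; field).
      replace ((IZR l - 1 + / 2) * h) with (x - h / 2) by (unfold x; field).
      apply (tau1_bound (P i) (V i) T M h dt x tk); auto.
      destruct (Hsol (tk + dt) x ltac:(lra)) as [E1 _]. exact (E1 i Hi).
    + apply (Up K2); [|right; left; reflexivity].
      unfold tau2, DlogP, Phat, Pc, Ve. rewrite Et. change (INR k * dt) with tk. fold e.
      rewrite Ee1, Ee0.
      destruct (Hsol (tk + dt) e ltac:(lra)) as [_ [E2 _]]. specialize (E2 i Hi).
      assert (Dl : forall j, (j < n)%nat -> Derive (fun y => ln (P j y (tk + dt))) e
                     = pd (true :: nil) (P j) e (tk + dt) * / P j e (tk + dt)).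
      { intros j Hj. apply (PJ j Hj). }
      rewrite (Dl i Hi) in E2.
      rewrite (sumR_ext n (fun j => P j e (tk + dt) * Derive (fun y => ln (P j y (tk + dt))) e)
                 (fun j => P j e (tk + dt) * (pd (true :: nil) (P j) e (tk + dt) * / P j e (tk + dt)))) in E2
        by (intros j Hj; rewrite (Dl j Hj); reflexivity).
      apply (tau2_alg n (fun j => (P j (e - h / 2) tk + P j (e + h / 2) tk) / 2)
                        (fun j => (ln (P j (e + h / 2) (tk + dt)) - ln (P j (e - h / 2) (tk + dt))) / h)
                        (fun j => P j e (tk + dt))
                        (fun j => pd (true :: nil) (P j) e (tk + dt) * / P j e (tk + dt))
                        (fun j => V j e (tk + dt)) (b i) (V i e (tk + dt)) i M G B (dt + h ^ 2)); auto; try lia.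
      intros j Hj. destruct (PJ j Hj) as [Q1 [Q2 [Q3 [Q4 [_ [Q6 [Q7 Q8]]]]]]].
      destruct (HM j Hj) as [_ [_ [_ [_ [_ [_ [_ [_ [_ [c9 _]]]]]]]]]].
      exact (conj Q4 (conj Q2 (conj Q3 (conj Q6 (conj Q7 (conj Q8 (conj Q1 (conj (c9 e (tk + dt) ltac:(lra)) (HB i Hi j Hj))))))))).
  - apply (Up K3); [|right; right; reflexivity].
    unfold tau3, Phat, Pc, Ve. rewrite Et. change (INR k * dt) with tk. fold e.
    rewrite Ee1, Ee0.
    destruct (Hsol (tk + dt) e ltac:(lra)) as [_ [_ E3]].
    eapply Rle_trans.
    { apply (tau3_alg n (fun j => (P j (e - h / 2) tk + P j (e + h / 2) tk) / 2)
                      (fun j => P j e (tk + dt)) (fun j => V j e (tk + dt)) M (dt + h ^ 2)); auto.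
      intros j Hj. destruct (PJ j Hj) as [Q1 _].
      destruct (HM j Hj) as [_ [_ [_ [_ [_ [_ [_ [_ [_ [c9 _]]]]]]]]]].
      exact (conj Q1 (c9 e (tk + dt) ltac:(lra))). }
    unfold K3. apply Req_le. ring.
Qed.
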